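(* Let $X\neq\emptyset$ be a set and $\Phi$ a nonempty set of bounded functions $X\to\mathbb{R}$ that is compact with respect to $D_\Phi$. If the pseudo-metric space $(X,D_X)$ is complete, then $(X,D_X)$ is compact.
   Context: $D_\Phi(\varphi_1,\varphi_2):=\|\varphi_1-\varphi_2\|_\infty=\sup_{x\in X}|\varphi_1(x)-\varphi_2(x)|$. $D_X(x_1,x_2):=\sup_{\varphi\in\Phi}|\varphi(x_1)-\varphi(x_2)|$ (a pseudo-metric on $X$, finite since $\Phi$ is bounded); $X$ carries the topology induced by $D_X$. *)

(* Defs.v *)
From Stdlib Require Import Reals List ClassicalEpsilon.
Open Scope R_scope.

(* Supremum of a set of reals (chosen via classical choice; meaningful
   when the set is nonempty and bounded above, i.e. when a lub exists). *)
Definition Rsup (A : R -> Prop) : R :=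
  epsilon (inhabits 0) (fun l => is_lub A l).

Definition D_Phi {X : Type} (f g : X -> R) : R :=
  Rsup (fun r => exists x : X, r = Rabs (f x - g x)).

Definition D_X {X : Type} (Phi : (X -> R) -> Prop) (x1 x2 : X) : R :=
  Rsup (fun r => exists phi, Phi phi /\ r = Rabs (phi x1 - phi x2)).

Definition bounded_fun {X : Type} (f : X -> R) : Prop :=
  exists M : R, forall x, Rabs (f x) <= M.

(* S is compact as a (pseudo)metric subspace of (T,d): every cover of S by
   sets open in the subspace topology of S admits a finite subcover. *)
Definition compact_in {T : Type} (d : T -> T -> R) (S : T -> Prop) : Prop :=
  forall (I : Type) (U : I -> T -> Prop),
    (forall i x, S x -> U i x ->
       exists eps, 0 < eps /\ forall y, S y -> d x y < eps -> U i y) ->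
    (forall x, S x -> exists i, U i x) ->
    exists l : list I, forall x, S x -> exists i, In i l /\ U i x.

Definition compact_space {T : Type} (d : T -> T -> R) : Prop :=
  compact_in d (fun _ => True).

Definition complete_space {T : Type} (d : T -> T -> R) : Prop :=
  forall u : nat -> T,
    (forall eps, 0 < eps -> exists N : nat, forall n m : nat,
        (N <= n)%nat -> (N <= m)%nat -> d (u n) (u m) < eps) ->
    exists l : T, forall eps, 0 < eps -> exists N : nat, forall n : nat,
        (N <= n)%nat -> d (u n) l < eps.

(* Main.v *)
Require Import Defs.
From Stdlib Require Import Reals List ClassicalEpsilon.
From Stdlib Require Import Lra Lia Classical.
Open Scope R_scope.

Ltac rabs :=
  repeat match goal with
  | |- context [Rabs ?a] =>
      let h := fresh in destruct (Rcase_abs a) as [h|h];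
      [rewrite (Rabs_left a h) in * | rewrite (Rabs_right a h) in *]
  | H : context [Rabs ?a] |- _ =>
      let h := fresh in destruct (Rcase_abs a) as [h|h];
      [rewrite (Rabs_left a h) in * | rewrite (Rabs_right a h) in *]
  end; lra.

Lemma Rsup_lub (A : R -> Prop) : (exists x, A x) -> (exists M, forall x, A x -> x <= M) ->
  is_lub A (Rsup A).
Proof.
  intros [x Hx] [M HM]. unfold Rsup. apply epsilon_spec.
  destruct (completeness A) as [l Hl].
  - exists M. intros y Hy. apply HM; exact Hy.
  - exists x; exact Hx.
  - exists l; exact Hl.
Qed.

Section S.
Variable X : Type.
Variable hX : inhabited X.

Lemma Dphi_lub (f g : X -> R) : bounded_fun f -> bounded_fun g ->
  is_lub (fun r => exists x : X, r = Rabs (f x - g x)) (D_Phi f g).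
Proof.
  intros [Mf Hf] [Mg Hg]. apply Rsup_lub.
  - destruct hX as [x]. eexists; exists x; reflexivity.
  - exists (Mf + Mg). intros r [x ->]. specialize (Hf x); specialize (Hg x). rabs.
Qed.

Lemma Dphi_ge (f g : X -> R) x : bounded_fun f -> bounded_fun g ->
  Rabs (f x - g x) <= D_Phi f g.
Proof. intros bf bg. apply (Dphi_lub f g bf bg). exists x; reflexivity. Qed.

Lemma Dphi_le (f g : X -> R) b : bounded_fun f -> bounded_fun g ->
  (forall x, Rabs (f x - g x) <= b) -> D_Phi f g <= b.
Proof. intros bf bg H. apply (Dphi_lub f g bf bg). intros r [x ->]. apply H. Qed.

Lemma Dphi_tri (f g h : X -> R) : bounded_fun f -> bounded_fun g -> bounded_fun h ->
  D_Phi f h <= D_Phi f g + D_Phi g h.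
Proof.
  intros bf bg bh. apply Dphi_le; auto. intros x.
  pose proof (Dphi_ge f g x bf bg). pose proof (Dphi_ge g h x bg bh). rabs.
Qed.

Lemma list_bound (l : list (X -> R)) : (forall f, In f l -> bounded_fun f) ->
  exists M, forall f, In f l -> forall x, Rabs (f x) <= M.
Proof.
  induction l as [|f l IH]; intros Hb.
  - exists 0. intros f [].
  - destruct (Hb f (or_introl eq_refl)) as [Mf Hf].
    destruct IH as [Ml Hl]. { intros g Hg; apply Hb; right; exact Hg. }
    exists (Rmax Mf Ml). intros g [<-|Hg] x.
    + eapply Rle_trans; [apply Hf|apply Rmax_l].
    + eapply Rle_trans; [apply (Hl g Hg)|apply Rmax_r].
Qed.

Lemma net_fs (fs : list (X -> R)) : (forall f, In f fs -> bounded_fun f) ->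
  forall r, 0 < r -> forall S : X -> Prop,
  exists L, (forall c, In c L -> S c) /\
    forall x, S x -> exists c, In c L /\ forall f, In f fs -> Rabs (f x - f c) < r.
Proof.
  induction fs as [|f fs IH]; intros Hb r hr S.
  - destruct (classic (exists x, S x)) as [[x Hx]|Hn].
    + exists (x :: nil). split.
      * intros c [<-|[]]; exact Hx.
      * intros y _. exists x. split; [left; reflexivity| intros f []].
    + exists nil. split; [intros c []|]. intros x Hx; exfalso; apply Hn; exists x; exact Hx.
  - assert (IHf : forall S, exists L, (forall c, In c L -> S c) /\
      forall x, S x -> exists c, In c L /\ forall g, In g fs -> Rabs (g x - g c) < r).
    { intros S'. apply IH; auto. intros g Hg; apply Hb; right; exact Hg. }
    assert (claim : forall n a (S : X -> Prop),
      (forall x, S x -> a <= f x < a + INR n * r) ->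
      exists L, (forall c, In c L -> S c) /\
      forall x, S x -> exists c, In c L /\ forall g, In g (f :: fs) -> Rabs (g x - g c) < r).
    { induction n as [|n IHn]; intros a S' HS.
      - exists nil. split; [intros c []|]. intros x Hx. specialize (HS x Hx). simpl in HS. lra.
      - destruct (IHf (fun x => S' x /\ f x < a + r)) as [L1 [H1a H1b]].
        destruct (IHn (a + r) (fun x => S' x /\ a + r <= f x)) as [L2 [H2a H2b]].
        { intros x [Hx Hx']. specialize (HS x Hx). rewrite S_INR in HS. lra. }
        exists (L1 ++ L2). split.
        + intros c Hc. apply in_app_iff in Hc. destruct Hc as [Hc|Hc].
          * apply H1a; exact Hc.
          * apply H2a; exact Hc.
        + intros x Hx. destruct (Rlt_le_dec (f x) (a + r)) as [Hlt|Hge].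
          * destruct (H1b x (conj Hx Hlt)) as [c [Hc Hc']]. exists c.
            split; [apply in_app_iff; left; exact Hc|].
            intros g [<-|Hg]; [|apply Hc'; exact Hg].
            destruct (H1a c Hc) as [Sc Fc]. pose proof (HS c Sc). pose proof (HS x Hx).
            rabs.
          * destruct (H2b x (conj Hx Hge)) as [c [Hc Hc']]. exists c.
            split; [apply in_app_iff; right; exact Hc| exact Hc']. }
    destruct (Hb f (or_introl eq_refl)) as [M HM].
    destruct (INR_unbounded ((2 * Rabs M + 1) / r)) as [n Hn].
    apply (claim n (- Rabs M - 1)). intros x _. specialize (HM x).
    assert (INR n * r > 2 * Rabs M + 1).
    { replace (2 * Rabs M + 1) with ((2 * Rabs M + 1) / r * r) by (field; lra).
      apply Rmult_lt_compat_r; lra. }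
    rabs.
Qed.

End S.


Theorem mainTheorem3 (X : Type) (Phi : (X -> R) -> Prop)
  (hX : inhabited X)
  (hPhi_ne : exists phi, Phi phi)
  (hPhi_bdd : forall phi, Phi phi -> bounded_fun phi)
  (hPhi_cpt : compact_in (@D_Phi X) Phi)
  (hcomplete : complete_space (D_X Phi)) :
  compact_space (D_X Phi).
Proof.
  assert (net : forall r, 0 < r -> exists l : list (X -> R),
     (forall f, In f l -> Phi f) /\ forall g, Phi g -> exists f, In f l /\ D_Phi f g < r).
  { intros r hr.
    destruct (hPhi_cpt (sig Phi) (fun i g => D_Phi (proj1_sig i) g < r)) as [l Hl].
    - intros [f Hf] g Hg Hfg. simpl in Hfg. exists (r - D_Phi f g). split; [lra|].
      intros y Hy Hgy. simpl.
      pose proof (Dphi_tri X hX f g y (hPhi_bdd f Hf) (hPhi_bdd g Hg) (hPhi_bdd y Hy)). lra.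
    - intros g Hg. exists (exist _ g Hg). simpl.
      pose proof (Dphi_le X hX g g 0 (hPhi_bdd g Hg) (hPhi_bdd g Hg)) as H.
      assert (D_Phi g g <= 0). { apply H. intros x. replace (g x - g x) with 0 by ring.
        rewrite Rabs_R0; lra. } lra.
    - exists (map (@proj1_sig _ _) l). split.
      + intros f Hf. apply in_map_iff in Hf. destruct Hf as [[f' Hf'] [<- _]]. exact Hf'.
      + intros g Hg. destruct (Hl g Hg) as [[f Hf] [Hi Hu]]. exists f. split; [|exact Hu].
        apply in_map_iff. exists (exist _ f Hf). split; [reflexivity|exact Hi]. }
  destruct (net 1 ltac:(lra)) as [l1 [Hl1a Hl1b]].
  destruct (list_bound X l1) as [M HM].
  { intros f Hf; apply hPhi_bdd, Hl1a, Hf. }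
  assert (UB : forall g, Phi g -> forall x, Rabs (g x) <= M + 1).
  { intros g Hg x. destruct (Hl1b g Hg) as [f [Hf Hd]].
    pose proof (Dphi_ge X hX f g x (hPhi_bdd f (Hl1a f Hf)) (hPhi_bdd g Hg)).
    pose proof (HM f Hf x). rabs. }
  set (d := D_X Phi).
  assert (dlub : forall x y, is_lub (fun r => exists phi, Phi phi /\ r = Rabs (phi x - phi y)) (d x y)).
  { intros x y. apply Rsup_lub.
    - destruct hPhi_ne as [p Hp]. eexists; exists p; split; [exact Hp|reflexivity].
    - exists (2 * (M + 1)). intros r [p [Hp ->]]. pose proof (UB p Hp x). pose proof (UB p Hp y).
      rabs. }
  assert (dge : forall x y p, Phi p -> Rabs (p x - p y) <= d x y).
  { intros x y p Hp. apply (dlub x y). exists p; split; [exact Hp|reflexivity]. }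
  assert (dle : forall x y b, (forall p, Phi p -> Rabs (p x - p y) <= b) -> d x y <= b).
  { intros x y b H. apply (dlub x y). intros r [p [Hp ->]]. apply H; exact Hp. }
  assert (dtri : forall x y z, d x z <= d x y + d y z).
  { intros x y z. apply dle. intros p Hp. pose proof (dge x y p Hp). pose proof (dge y z p Hp). rabs. }
  assert (dsym : forall x y, d y x <= d x y).
  { intros x y. apply dle. intros p Hp. pose proof (dge x y p Hp). rabs. }
  assert (TB : forall eps, 0 < eps -> exists L : list X, forall x, exists c, In c L /\ d c x < eps).
  { intros eps he. destruct (net (eps/4) ltac:(lra)) as [fs [Hfa Hfb]].
    destruct (net_fs X fs (fun f Hf => hPhi_bdd f (Hfa f Hf)) (eps/4) ltac:(lra) (fun _ => True))
      as [L [_ HL]].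
    exists L. intros x. destruct (HL x I) as [c [Hc Hc']]. exists c. split; [exact Hc|].
    assert (d c x <= 3 * eps / 4); [|lra].
    apply dle. intros p Hp. destruct (Hfb p Hp) as [f [Hf Hfp]].
    pose proof (Dphi_ge X hX f p c (hPhi_bdd f (Hfa f Hf)) (hPhi_bdd p Hp)).
    pose proof (Dphi_ge X hX f p x (hPhi_bdd f (Hfa f Hf)) (hPhi_bdd p Hp)).
    pose proof (Hc' f Hf). rabs. }
  intros I U Hopen Hcov.
  apply NNPP. intros Hnot.
  set (bad := fun A : X -> Prop => ~ exists l : list I, forall x, A x -> exists i, In i l /\ U i x).
  assert (bad_ne : forall A, bad A -> exists x, A x).
  { intros A HA. apply NNPP. intros Hn. apply HA. exists nil. intros x Hx. exfalso; apply Hn; exists x; exact Hx. }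
  assert (bad_mono : forall A B : X -> Prop, (forall x, A x -> B x) -> bad A -> bad B).
  { intros A B HAB HA [l Hl]. apply HA. exists l. intros x Hx. apply Hl, HAB, Hx. }
  assert (split : forall r (L : list X) (A : X -> Prop), bad A ->
     (forall x, A x -> exists c, In c L /\ d c x < r) ->
     exists c, bad (fun x => A x /\ d c x < r)).
  { intros r L. induction L as [|c L IH]; intros A HA HL.
    - destruct (bad_ne A HA) as [x Hx]. destruct (HL x Hx) as [c [[] _]].
    - destruct (classic (bad (fun x => A x /\ d c x < r))) as [Hb|Hb].
      + exists c; exact Hb.
      + unfold bad in Hb. apply NNPP in Hb. destruct Hb as [k1 Hk1].
        destruct (IH (fun x => A x /\ ~ d c x < r)) as [c' Hc'].
        * intros [l2 Hl2]. apply HA. exists (k1 ++ l2). intros x Hx.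
          destruct (classic (d c x < r)) as [h|h].
          -- destruct (Hk1 x (conj Hx h)) as [i [Hi Hu]]. exists i. split; [apply in_app_iff; left; exact Hi|exact Hu].
          -- destruct (Hl2 x (conj Hx h)) as [i [Hi Hu]]. exists i. split; [apply in_app_iff; right; exact Hi|exact Hu].
        * intros x [Hx Hn]. destruct (HL x Hx) as [c0 [[<-|Hc0] Hd]]; [contradiction|].
          exists c0; split; assumption.
        * exists c'. revert Hc'. apply bad_mono. intros x [[Hx _] Hd]. split; assumption. }
  set (r := fun n : nat => / INR (S n)).
  assert (rpos : forall n, 0 < r n).
  { intros n. unfold r. apply Rinv_0_lt_compat. apply lt_0_INR. lia. }
  assert (rsmall : forall eps, 0 < eps -> exists N, r N < eps).
  { intros eps he. destruct (archimed_cor1 eps he) as [N [HN HN0]]. exists N. unfold r.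
    eapply Rle_lt_trans; [|exact HN]. apply Rinv_le_contravar.
    - apply lt_0_INR; exact HN0.
    - apply le_INR; lia. }
  destruct hX as [x0].
  set (cen := fun (n : nat) (B : X -> Prop) =>
     epsilon (inhabits x0) (fun c => bad (fun x => B x /\ d c x < r n))).
  set (A := fix A (n : nat) : X -> Prop := match n with
     | O => fun _ => True
     | S n => fun x => A n x /\ d (cen n (A n)) x < r n end).
  assert (Abad : forall n, bad (A n)).
  { induction n as [|n IH].
    - simpl. intros [l Hl]. apply Hnot. exists l. intros x _. apply Hl. exact Logic.I.
    - destruct (TB (r n) (rpos n)) as [L HL].
      assert (Hex : exists c, bad (fun x => A n x /\ d c x < r n)).
      { apply (split (r n) L); [exact IH|]. intros x _. apply HL. }
      exact (epsilon_spec (inhabits x0) _ Hex). }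
  assert (Amono : forall n m x, (n <= m)%nat -> A m x -> A n x).
  { intros n m x Hnm. induction Hnm as [|m Hm IH]; [auto|]. intros [Hx _]. apply IH; exact Hx. }
  set (u := fun n => epsilon (inhabits x0) (fun x => A (S n) x)).
  assert (uA : forall n, A (S n) (u n)).
  { intros n. unfold u. apply epsilon_spec. apply bad_ne, Abad. }
  assert (near : forall N y z, A (S N) y -> A (S N) z -> d y z < 2 * r N).
  { intros N y z [_ Hy] [_ Hz]. pose proof (dtri y (cen N (A N)) z).
    pose proof (dsym (cen N (A N)) y). lra. }
  destruct (hcomplete u) as [l Hl].
  { intros eps he. destruct (rsmall (eps/2) ltac:(lra)) as [N HN]. exists N.
    intros n m Hn Hm. pose proof (near N (u n) (u m)
      (Amono (S N) (S n) _ ltac:(lia) (uA n)) (Amono (S N) (S m) _ ltac:(lia) (uA m))). fold d. lra. }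
  destruct (Hcov l Logic.I) as [i Hi].
  destruct (Hopen i l Logic.I Hi) as [e0 [He0 Hball]].
  destruct (rsmall (e0/4) ltac:(lra)) as [N HN].
  destruct (Hl (e0/4) ltac:(lra)) as [K HK].
  apply (Abad (S N)). exists (i :: nil). intros y Hy. exists i. split; [left; reflexivity|].
  apply Hball; [exact Logic.I|].
  set (m := Nat.max N K).
  pose proof (HK m ltac:(lia)).
  pose proof (near N (u m) y (Amono (S N) (S m) _ ltac:(lia) (uA m)) Hy).
  pose proof (dtri l (u m) y). pose proof (dsym (u m) l).
  fold d. change (D_X Phi) with d. change (D_X Phi (u m) l) with (d (u m) l) in *. lra.
Qed.
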